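(* Let $\Phi=\varphi\land\bigwedge RE\land\bigwedge DI$ be an $\mathcal{ALCQIO}_{b,Re}$-formula over $\tau$ with $RE=\{\mathit{Reach}(B_1,S_1,A_1),\dots,\mathit{Reach}(B_h,S_h,A_h)\}$. Let $1\le h'\le h$ and let $\mathcal{M}$ be a $\tau$-structure such that $\mathcal{M}\models\mathit{assoc}(\Phi)$, $\mathcal{M}$ is $\Phi$-semi-connected, and $\mathcal{M}$ has $\ell$-useful labelings $f_\ell$ for all $1\le\ell\le h$. If $\mathit{val}_{f_{h'}}(D^{\mathcal{M}}_{h'})>0$, then there is a tuple $\mathfrak{t}=(a_0,a_1,r)$ with $a_0,a_1\in M$ and $r\in\mathsf{N_F}$ such that: 1. $D^{\mathcal{M}}_\ell=D^{\mathcal{M}\rhd\mathfrak{t}}_\ell$ for all $\ell\ne h'$; 2. $\overline{tp}^{\varphi}_{\mathcal{M}}(u)=\overline{tp}^{\varphi}_{\mathcal{M}\rhd\mathfrak{t}}(u)$ for all $u\in M$; 3. $\mathcal{M}\rhd\mathfrak{t}\models\mathit{assoc}(\Phi)$; 4. $\mathit{val}_{f_{h'}}(D^{\mathcal{M}}_{h'})>\mathit{val}_{f_{h'}}(D^{\mathcal{M}\rhd\mathfrak{t}}_{h'})$; 5. $\mathit{val}_{f_\ell}(D^{\mathcal{M}}_\ell)=\mathit{val}_{f_\ell}(D^{\mathcal{M}\rhd\mathfrak{t}}_\ell)$ for all $\ell\ne h'$; 6. $\mathcal{M}\rhd\mathfrak{t}$ is $\Phi$-semi-connected; 7. $f_\ell$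 is an $\ell$-useful labeling for $\mathcal{M}\rhd\mathfrak{t}$ for all $1\le\ell\le h$.
   Context: Structures are finite; $\tau$ has atomic concepts, atomic roles (a subset $\mathsf{N_F}$ functional, interpreted as partial functions) and nominals. $\mathcal{ALCQIO}_b$: concepts built from atomic concepts and nominals ($o$ denotes $\{o^{\mathcal{M}}\}$) using $\sqcap,\sqcup,\neg,\exists r.C,\exists^{\le n}r.C$ for roles $r$ atomic or inverse $r^-$; formulae are Boolean combinations of inclusions $C\sqsubseteq D$ and equalities $C\equiv D$; standard semantics. A reachability assertion $\mathit{Reach}(B,S,A)$ has atomic concepts $A,B$ and $S\subseteq\mathsf{N_F}$; $\mathit{Disj}(A_1,A_2)$ is $A_1\sqcap A_2\equiv\bot$. $RE,DI$ are compatible if for every two assertions $\mathit{Reach}(B_1,S_1,A_1),\mathit{Reach}(B_2,S_2,A_2)\in RE$ with $S_1\cap S_2\neq\emptyset$, $\mathit{Disj}(A_1,A_2)\in DI$. An $\mathcal{ALCQIO}_{b,Re}$-formula is $\Phi=\varphi\land\bigwedge RE\land\bigwedge DI$ with $\varphi\in\mathcal{ALCQIO}_b$, $RE,DI$ finite and compatible. $\mathit{assoc}(\Phi)=\varphi\land\bigwedge_{\mathit{Reach}(B,S,A)\in RE}(B\sqsubseteq A)\land\bigwedge DI$. $D^{\mathcal{M}}_{\ell}$ is the directed graph on vertex set $A_{\ell}^{\mathcal{M}}$ with edges $\bigcup_{s\in S_{\ell}}s^{\mathcal{M}}\cap(A_{\ell}^{\mathcal{M}}\times A_{\ell}^{\mathcal{M}})$.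 $\mathcal{M}$ is $\Phi$-semi-connected if $\mathcal{M}\models\mathit{assoc}(\Phi)$ and for every $\ell$ and $u\in A_{\ell}^{\mathcal{M}}$, $u$ is reachable in $D^{\mathcal{M}}_{\ell}$ from $B_{\ell}^{\mathcal{M}}$ or from a directed cycle of $D^{\mathcal{M}}_{\ell}$. Types: $\mathrm{Con}(\varphi)$ is the set of concepts occurring in $\varphi$ (including subconcepts), $\mathrm{TYPES}_\varphi$ its power set, $\overline{tp}^{\varphi}_{\mathcal{M}}(u)=\{C\in\mathrm{Con}(\varphi)\mid u\in C^{\mathcal{M}}\}$. An $\ell$-useful labeling for $\mathcal{M}$ is $f_\ell:A_{\ell}^{\mathcal{M}}\to[1,|\mathrm{TYPES}_\varphi|]$ such that (1) $f_\ell(u)=f_\ell(v)$ implies equal types, and (2) for every $u\in A_{\ell}^{\mathcal{M}}$, either $u\in B_{\ell}^{\mathcal{M}}$ or there are $v,w\in A_{\ell}^{\mathcal{M}}$ with $f_\ell(u)=f_\ell(v)$, $f_\ell(w)<f_\ell(v)$ and $(w,v)$ an edge of $D^{\mathcal{M}}_{\ell}$. A base for $D^{\mathcal{M}}_{\ell}$ is a set $X\subseteq A_{\ell}^{\mathcal{M}}$ from which all of $A_{\ell}^{\mathcal{M}}$ is reachable in $D^{\mathcal{M}}_{\ell}$; $\mathit{val}_f(X)=\sum_{x\in X\setminus B_{\ell}^{\mathcal{M}}}f(x)$ and $\mathit{val}_f(D^{\mathcal{M}}_{\ell})$ is the minimum of $\mathit{val}_f(X)$ over all bases $X$. The operation $\rhd$: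 for $\mathfrak{t}=(a_0,a_1,r)$, $\mathcal{M}\rhd\mathfrak{t}$ has the same universe and interpretations as $\mathcal{M}$ except $r^{\mathcal{M}\rhd\mathfrak{t}}=\big(r^{\mathcal{M}}\setminus\{(a_i,b)\mid (a_i,b)\in r^{\mathcal{M}},i\in\{0,1\}\}\big)\cup\{(a_{1-i},b)\mid (a_i,b)\in r^{\mathcal{M}},i\in\{0,1\}\}$. *)

(* Defs.v *)
From HB Require Import structures.
From mathcomp Require Import all_boot.

Set Implicit Arguments.
Unset Strict Implicit.
Unset Printing Implicit Defensive.

(* ---------- Syntax of ALCQIO_b over a signature tau ----------
   AC  : atomic concept names
   RN  : atomic role names (N_F : pred RN are the functional ones)
   NOM : nominals *)
Section Syntax.
Variables (AC RN NOM : eqType).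

Inductive role := RAt of RN | RInv of RN.

Definition role_eqb (r s : role) : bool :=
  match r, s with
  | RAt a, RAt b => a == b
  | RInv a, RInv b => a == b
  | _, _ => false
  end.

Lemma role_eqP : Equality.axiom role_eqb.
Proof.
case=> [a|a] [b|b] /=; try by constructor.
- by apply: (iffP eqP) => [->|[]].
- by apply: (iffP eqP) => [->|[]].
Qed.

HB.instance Definition _ := hasDecEq.Build role role_eqP.

Inductive concept :=
  | CAt of AC
  | CNom of NOM
  | CNot of concept
  | CAnd of concept & concept
  | COr of concept & concept
  | CEx of role & concept
  | CAtMost of nat & role & concept.

Fixpoint concept_eqb (C D : concept) : bool :=
  match C, D with
  | CAt a, CAt b => a == b
  | CNom a, CNom b => a == b
  | CNot c, CNot d => concept_eqb c d
  | CAnd c1 c2, CAnd d1 d2 => concept_eqb c1 d1 && concept_eqb c2 d2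
  | COr c1 c2, COr d1 d2 => concept_eqb c1 d1 && concept_eqb c2 d2
  | CEx r c, CEx s d => (r == s) && concept_eqb c d
  | CAtMost n r c, CAtMost m s d => [&& n == m, r == s & concept_eqb c d]
  | _, _ => false
  end.

Lemma concept_eqP : Equality.axiom concept_eqb.
Proof.
elim=> [a|a|c IH|c1 IH1 c2 IH2|c1 IH1 c2 IH2|r c IH|n r c IH]
       [b|b|d|d1 d2|d1 d2|s d|m s d] /=; try by constructor.
- by apply: (iffP eqP) => [->|[]].
- by apply: (iffP eqP) => [->|[]].
- by apply: (iffP (IH d)) => [->|[]].
- apply: (iffP andP) => [[/IH1 -> /IH2 ->]//|[<- <-]].
  by split; [apply/IH1|apply/IH2].
- apply: (iffP andP) => [[/IH1 -> /IH2 ->]//|[<- <-]].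
  by split; [apply/IH1|apply/IH2].
- apply: (iffP andP) => [[/eqP -> /IH ->]//|[<- <-]].
  by split; [|apply/IH].
- apply: (iffP and3P) => [[/eqP -> /eqP -> /IH ->]//|[<- <- <-]].
  by split; [| |apply/IH].
Qed.

HB.instance Definition _ := hasDecEq.Build concept concept_eqP.

Inductive formula :=
  | FIncl of concept & concept
  | FEqv of concept & concept
  | FNot of formula
  | FAnd of formula & formula
  | FOr of formula & formula.

Fixpoint subconcepts (C : concept) : seq concept :=
  C :: match C with
       | CAt _ | CNom _ => [::]
       | CNot c => subconcepts c
       | CAnd c d | COr c d => subconcepts c ++ subconcepts d
       | CEx _ c | CAtMost _ _ c => subconcepts c
       end.

Fixpoint fconcepts (phi : formula) : seq concept :=
  match phi with
  | FIncl C D | FEqv C D => subconcepts C ++ subconcepts D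
  | FNot p => fconcepts p
  | FAnd p q | FOr p q => fconcepts p ++ fconcepts q
  end.

Definition Con (phi : formula) : seq concept := undup (fconcepts phi).

(* |TYPES_phi| = |powerset of Con(phi)| *)
Definition nTYPES (phi : formula) : nat := 2 ^ size (Con phi).

Record reach := Reach { rB : AC; rS : seq RN; rA : AC }.

Definition reach_eqb (x y : reach) : bool :=
  [&& rB x == rB y, rS x == rS y & rA x == rA y].

Lemma reach_eqP : Equality.axiom reach_eqb.
Proof.
case=> [b s a] [b' s' a']; rewrite /reach_eqb /=.
by apply: (iffP and3P) => [[/eqP -> /eqP -> /eqP ->]|[-> -> ->]].
Qed.

HB.instance Definition _ := hasDecEq.Build reach reach_eqP.

(* Phi = phi /\ /\RE /\ /\DI is an ALCQIO_{b,Re}-formula: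
   RE is a (duplicate-free listing of a) finite set of reachability
   assertions with S subset of N_F, DI a list of pairs (A1,A2) standing
   for Disj(A1,A2), and RE, DI compatible. *)
Definition compatible (RE : seq reach) (DI : seq (AC * AC)) : Prop :=
  forall i j : 'I_(size RE), i != j ->
    let r1 := tnth (in_tuple RE) i in
    let r2 := tnth (in_tuple RE) j in
    has (fun s => s \in rS r2) (rS r1) ->
    ((rA r1, rA r2) \in DI) || ((rA r2, rA r1) \in DI).

Definition wf_ALCQIObRe (NF : pred RN) (RE : seq reach) (DI : seq (AC * AC))
  : Prop :=
  [/\ uniq RE, all (fun rho => all NF (rS rho)) RE & compatible RE DI].

End Syntax.

Section Semantics.
Variables (AC RN NOM : eqType) (T : finType).

Record structure := Struct {
  cI : AC -> pred T;
  rI : RN -> rel T;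
  oI : NOM -> T
}.

Definition functional_ok (NF : pred RN) (M : structure) : Prop :=
  forall r, NF r -> forall u v w, rI M r u v -> rI M r u w -> v = w.

Definition roleI (M : structure) (R : role RN) : rel T :=
  match R with
  | RAt r => rI M r
  | RInv r => fun u v => rI M r v u
  end.

Fixpoint sem (M : structure) (C : concept AC RN NOM) : pred T :=
  match C with
  | CAt A => cI M A
  | CNom o => pred1 (oI M o)
  | CNot c => fun u => ~~ sem M c u
  | CAnd c d => fun u => sem M c u && sem M d u
  | COr c d => fun u => sem M c u || sem M d u
  | CEx R c => fun u => [exists v, roleI M R u v && sem M c v]
  | CAtMost n R c => fun u => #|[set v | roleI M R u v && sem M c v]| <= n
  end.

Fixpoint fsat (M : structure) (phi : formula AC RN NOM) : bool :=
  match phi with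
  | FIncl C D => [forall x, sem M C x ==> sem M D x]
  | FEqv C D => [forall x, sem M C x == sem M D x]
  | FNot p => ~~ fsat M p
  | FAnd p q => fsat M p && fsat M q
  | FOr p q => fsat M p || fsat M q
  end.

Definition tp (M : structure) (phi : formula AC RN NOM) (u : T)
  : seq (concept AC RN NOM) :=
  [seq C <- Con phi | sem M C u].

Definition assoc_sat (M : structure) (phi : formula AC RN NOM)
  (RE : seq (reach AC RN)) (DI : seq (AC * AC)) : bool :=
  [&& fsat M phi,
      all (fun rho => [forall x, cI M (rB rho) x ==> cI M (rA rho) x]) RE
    & all (fun p => [forall x, ~~ (cI M p.1 x && cI M p.2 x)]) DI].

Definition Dgraph (M : structure) (rho : reach AC RN)
  : {set T} * {set T * T} :=
  ([set u | cI M (rA rho) u],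
   [set e | [&& cI M (rA rho) e.1, cI M (rA rho) e.2
              & has (fun s => rI M s e.1 e.2) (rS rho)]]).

Definition Dedge (M : structure) (rho : reach AC RN) : rel T :=
  fun u v => (u, v) \in (Dgraph M rho).2.

Definition on_cycle (M : structure) (rho : reach AC RN) (v : T) : bool :=
  [exists w, Dedge M rho v w && connect (Dedge M rho) w v].

Definition semi_connected (M : structure) (phi : formula AC RN NOM)
  (RE : seq (reach AC RN)) (DI : seq (AC * AC)) : Prop :=
  assoc_sat M phi RE DI /\
  forall rho, rho \in RE -> forall u, u \in (Dgraph M rho).1 ->
    (exists x, cI M (rB rho) x /\ connect (Dedge M rho) x u) \/
    (exists v, on_cycle M rho v /\ connect (Dedge M rho) v u).

(* f is a rho-useful labeling for M (only its values on A^M matter) *)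
Definition useful (M : structure) (phi : formula AC RN NOM)
  (rho : reach AC RN) (f : T -> nat) : Prop :=
  forall u, u \in (Dgraph M rho).1 ->
    [/\ 1 <= f u <= nTYPES phi,
        (forall v, v \in (Dgraph M rho).1 -> f u = f v -> tp M phi u = tp M phi v)
      & cI M (rB rho) u \/
        exists v w, [/\ v \in (Dgraph M rho).1, w \in (Dgraph M rho).1,
                        f u = f v, f w < f v & Dedge M rho w v]].

Definition isBase (M : structure) (rho : reach AC RN) (X : {set T}) : bool :=
  (X \subset (Dgraph M rho).1) &&
  [forall u in (Dgraph M rho).1, [exists x in X, connect (Dedge M rho) x u]].

Definition valX (M : structure) (rho : reach AC RN) (f : T -> nat)
  (X : {set T}) : nat :=
  \sum_(x in X :\: [set u | cI M (rB rho) u]) f x.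

(* minimum over all bases; A^M itself is a base, so it serves as the
   neutral element of the min *)
Definition valD (M : structure) (rho : reach AC RN) (f : T -> nat) : nat :=
  \big[minn/valX M rho f (Dgraph M rho).1]_(X : {set T} | isBase M rho X)
     valX M rho f X.

Definition swap_rel (R : rel T) (a0 a1 : T) : rel T :=
  fun x b => (R x b && (x \notin [:: a0; a1]))
             || ((x == a1) && R a0 b) || ((x == a0) && R a1 b).

Definition rhd (M : structure) (a0 a1 : T) (r : RN) : structure :=
  Struct (cI M)
         (fun r' => if r' == r then swap_rel (rI M r) a0 a1 else rI M r')
         (oI M).

End Semantics.

(* Main.v *)
Require Import Defs.
From mathcomp Require Import all_boot.
Set Implicit Arguments. Unset Strict Implicit. Unset Printing Implicit Defensive.

Section Types.
Variables (AC RN NOM : eqType) (T : finType).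
Implicit Types (M : structure AC RN NOM T) (C : concept AC RN NOM).

Lemma sub_refl C : C \in subconcepts C.
Proof. by case: C => * /=; rewrite inE eqxx. Qed.

Lemma sub_trans C D : D \in subconcepts C -> {subset subconcepts D <= subconcepts C}.
Proof.
elim: C => [a|a|c IH|c1 IH1 c2 IH2|c1 IH1 c2 IH2|R c IH|n R c IH] /=.
- by rewrite inE => /eqP ->.
- by rewrite inE => /eqP ->.
- rewrite inE => /predU1P [-> //|H] x Hx; rewrite inE (IH H x Hx) orbT //.
- rewrite inE => /predU1P [-> //|]; rewrite mem_cat => /orP [H|H] x Hx;
    rewrite inE mem_cat ?(IH1 H x Hx) ?(IH2 H x Hx) ?orbT //.
- rewrite inE => /predU1P [-> //|]; rewrite mem_cat => /orP [H|H] x Hx;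
    rewrite inE mem_cat ?(IH1 H x Hx) ?(IH2 H x Hx) ?orbT //.
- rewrite inE => /predU1P [-> //|H] x Hx; rewrite inE (IH H x Hx) orbT //.
- rewrite inE => /predU1P [-> //|H] x Hx; rewrite inE (IH H x Hx) orbT //.
Qed.

Lemma fcon_sub (psi : formula AC RN NOM) C : C \in fconcepts psi ->
  {subset subconcepts C <= fconcepts psi}.
Proof.
elim: psi => [C1 D1|C1 D1|p IH|p IH q IHq|p IH q IHq] /=;
  try (rewrite mem_cat => /orP [H|H] x Hx; rewrite mem_cat ?(sub_trans H Hx) ?orbT //).
- exact: IH.
- by rewrite (IH H x Hx).
- by rewrite (IHq H x Hx) orbT.
- by rewrite (IH H x Hx).
- by rewrite (IHq H x Hx) orbT.
Qed.

Definition sw (u v x : T) := if x == u then v else if x == v then u else x.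

Lemma swK u v : involutive (sw u v).
Proof.
move=> x; rewrite /sw; case: (eqVneq x u) => [->|xu].
  by rewrite eqxx; case: eqVneq => // ->.
case: (eqVneq x v) => [->|xv]; first by rewrite eqxx.
by rewrite (negbTE xu) (negbTE xv).
Qed.

Lemma sw_inj u v : injective (sw u v).
Proof. exact: (can_inj (swK u v)). Qed.

Lemma rhd_rI M u v r x y : rI (rhd M u v r) r x y = rI M r (sw u v x) y.
Proof.
rewrite /= eqxx /swap_rel /sw !inE.
case: (eqVneq x u) => [->|xu] /=.
  rewrite andbF /=; case: (eqVneq u v) => [->|] //=; by rewrite orbb.
case: (eqVneq x v) => [->|xv] /=; first by rewrite andbF orbF.
by rewrite andbT !orbF.
Qed.

Lemma rhd_rI' M u v r r' : r' != r -> rI (rhd M u v r) r' = rI M r'.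
Proof. by move=> /negbTE /= ->. Qed.

Lemma exists_sw u v (Q : pred T) : [exists y, Q (sw u v y)] = [exists y, Q y].
Proof.
apply/existsP/existsP => [[y Hy]|[y Hy]]; first by exists (sw u v y).
by exists (sw u v y); rewrite swK.
Qed.

Lemma card_sw u v (Q : pred T) : #|[set y | Q (sw u v y)]| = #|[set y | Q y]|.
Proof.
have -> : [set y | Q (sw u v y)] = sw u v @^-1: [set y | Q y].
  by apply/setP => y; rewrite !inE.
exact/card_preimset/sw_inj.
Qed.

Lemma sem_ex M R c x : sem M (CEx R c) x = [exists y, roleI M R x y && sem M c y].
Proof. by []. Qed.
Lemma sem_am M n R c x : sem M (CAtMost n R c) x = (#|[set y | roleI M R x y && sem M c y]| <= n).
Proof. by []. Qed.
Lemma roleI_at M r : roleI M (RAt r) = rI M r.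
Proof. by []. Qed.
Lemma roleI_inv M r x y : roleI M (RInv r) x y = rI M r y x.
Proof. by []. Qed.

Lemma sem_rhd M u v r (K : pred (concept AC RN NOM)) :
  (forall C, K C -> forall x, sem M C (sw u v x) = sem M C x) ->
  forall C, {subset subconcepts C <= K} -> sem (rhd M u v r) C =1 sem M C.
Proof.
move=> Hinv; elim => [a|a|c IH|c1 IH1 c2 IH2|c1 IH1 c2 IH2|R c IH|n R c IH] HK x //.
- rewrite /= IH // => y Hy; apply: HK; by rewrite /= inE Hy orbT.
- rewrite /= IH1 ?IH2 // => y Hy; apply: HK; by rewrite /= inE mem_cat Hy ?orbT.
- rewrite /= IH1 ?IH2 // => y Hy; apply: HK; by rewrite /= inE mem_cat Hy ?orbT.
- have IHc : sem (rhd M u v r) c =1 sem M c.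
    apply: IH => y Hy; apply: HK; by rewrite /= inE Hy orbT.
  have HC : K (CEx R c) by apply: HK; rewrite sub_refl.
  have Hc : K c by apply: HK; rewrite /= inE sub_refl orbT.
  clear HK; rewrite !sem_ex.
  case: R HC => r' HC; case: (eqVneq r' r) HC => [->|ne] HC.
  + transitivity (sem M (CEx (RAt r) c) (sw u v x)); last exact: Hinv.
    rewrite sem_ex; apply: eq_existsb => y; by rewrite !roleI_at rhd_rI IHc.
  + apply: eq_existsb => y; by rewrite !roleI_at rhd_rI' // IHc.
  + transitivity [exists y, rI M r (sw u v y) x && sem M c (sw u v y)].
      by apply: eq_existsb => y; rewrite roleI_inv rhd_rI IHc Hinv.
    exact: (exists_sw u v (fun y => rI M r y x && sem M c y)).
  + apply: eq_existsb => y; by rewrite !roleI_inv rhd_rI' // IHc.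
- have IHc : sem (rhd M u v r) c =1 sem M c.
    apply: IH => y Hy; apply: HK; by rewrite /= inE Hy orbT.
  have HC : K (CAtMost n R c) by apply: HK; rewrite sub_refl.
  have Hc : K c by apply: HK; rewrite /= inE sub_refl orbT.
  clear HK; rewrite !sem_am.
  case: R HC => r' HC; case: (eqVneq r' r) HC => [->|ne] HC.
  + transitivity (sem M (CAtMost n (RAt r) c) (sw u v x)); last exact: Hinv.
    rewrite sem_am; congr (_ <= _); apply: eq_card => y.
    by rewrite !inE !roleI_at rhd_rI IHc.
  + congr (_ <= _); apply: eq_card => y; by rewrite !inE !roleI_at rhd_rI' // IHc.
  + congr (_ <= _).
    transitivity #|[set y | rI M r (sw u v y) x && sem M c (sw u v y)]|.
      by apply: eq_card => y; rewrite !inE roleI_inv rhd_rI IHc Hinv.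
    rewrite (card_sw u v (fun y => rI M r y x && sem M c y)).
    by apply: eq_card => y; rewrite !inE.
  + congr (_ <= _); apply: eq_card => y; by rewrite !inE !roleI_inv rhd_rI' // IHc.
Qed.

Lemma tp_rhd M u v r (phi : formula AC RN NOM) :
  tp M phi u = tp M phi v ->
  (forall x, tp (rhd M u v r) phi x = tp M phi x) /\
  fsat (rhd M u v r) phi = fsat M phi.
Proof.
move=> Htp.
have Hinv : forall C, C \in Con phi -> forall x, sem M C (sw u v x) = sem M C x.
  move=> C HC x; have E: sem M C u = sem M C v.
    by move: (congr1 (fun s => C \in s) Htp); rewrite /tp !mem_filter HC !andbT.
  rewrite /sw; case: (eqVneq x u) => [->|xu] //; case: (eqVneq x v) => [->|] //.
have Hs : forall C, C \in Con phi -> sem (rhd M u v r) C =1 sem M C.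
  move=> C HC; apply: (@sem_rhd M u v r (fun C => C \in Con phi) Hinv) => y Hy.
  move: HC; rewrite /Con !mem_undup => HC; exact: fcon_sub HC y Hy.
split.
  move=> x; apply: eq_in_filter => C HC; exact: Hs.
have : {subset fconcepts phi <= fconcepts phi} by [].
elim: {1 3 4}phi => [C D|C D|p IH|p IH q IHq|p IH q IHq] /= Hsub.
- congr (_ && _)|| apply: eq_forallb => x.
  rewrite !Hs // /Con mem_undup Hsub // mem_cat sub_refl ?orbT //.
- apply: eq_forallb => x.
  rewrite !Hs // /Con mem_undup Hsub // mem_cat sub_refl ?orbT //.
- by rewrite IH.
- by rewrite IH ?IHq // => y Hy; apply: Hsub; rewrite mem_cat Hy ?orbT.
- by rewrite IH ?IHq // => y Hy; apply: Hsub; rewrite mem_cat Hy ?orbT.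
Qed.
End Types.

Section Graph.
Variable T : finType.

Lemma L_cyc (e : rel T) a b c : connect e a b -> e b c -> connect e c a ->
  exists y, e a y /\ connect e y a.
Proof.
move=> /connectP [p Hp ->]; case: p Hp => [|y p] /= Hp Hbc Hca.
  by exists c.
case/andP: Hp => Hay Hp; exists y; split=> //.
apply: connect_trans (connect_trans _ (connect1 Hbc)) Hca.
by apply/connectP; exists p.
Qed.

Variables (e e' : rel T) (u v : T).
Hypothesis H2 : forall x y, x != u -> x != v -> e x y -> e' x y.
Hypothesis H3 : forall x y, (x == u) || (x == v) -> e x y -> e' u y || e' v y.

Lemma RU : ~~ connect e v u -> forall x, connect e x u -> connect e' x u.
Proof.
move=> nvu x /connectP [p Hp Hl]; elim: p x Hp Hl => [|y p IH] x /=.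
  by move=> _ <-; exact: connect0.
case/andP => Hxy Hp Hl; case: (eqVneq x u) => [->|xu]; first exact: connect0.
have xv : x != v.
  apply: contraNneq nvu => <-; apply/connectP; exists (y :: p) => //=.
  by rewrite Hxy.
apply: connect_trans (connect1 (H2 xu xv Hxy)) (IH y Hp Hl).
Qed.

Hypothesis Hvu : connect e' v u.

Lemma Pclaim x t : connect e x t -> connect e' x t \/ connect e' v t.
Proof.
move=> /connectP [p Hp ->]; elim: p x Hp => [|y p IH] x /=.
  by move=> _; left; exact: connect0.
case/andP => Hxy Hp; case: (IH y Hp) => [Hyt|]; last by right.
case: (eqVneq x u) => [exu|xu].
  have Hh : (x == u) || (x == v) by rewrite exu eqxx.
  case/orP: (H3 Hh Hxy) => H.
  - by left; rewrite exu; apply: connect_trans (connect1 H) Hyt.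
  - by right; apply: connect_trans (connect1 H) Hyt.
case: (eqVneq x v) => [exv|xv].
  have Hh : (x == u) || (x == v) by rewrite exv eqxx orbT.
  case/orP: (H3 Hh Hxy) => H.
  - by right; apply: connect_trans Hvu (connect_trans (connect1 H) Hyt).
  - by left; rewrite exv; apply: connect_trans (connect1 H) Hyt.
by left; apply: connect_trans (connect1 (H2 xu xv Hxy)) Hyt.
Qed.

Variable Bp : pred T.
Definition good (g : rel T) x :=
  (exists b, Bp b /\ connect g b x) \/
  (exists c, (exists y, g c y /\ connect g y c) /\ connect g c x).

Lemma good_trans (g : rel T) x t : good g x -> connect g x t -> good g t.
Proof.
case=> [[b [Hb Hbx]]|[c [Hc Hcx]]] Hxt.
  by left; exists b; split=> //; exact: connect_trans Hbx Hxt.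
by right; exists c; split=> //; exact: connect_trans Hcx Hxt.
Qed.

Lemma cyc_good (g : rel T) x : (exists y, g x y /\ connect g y x) -> good g x.
Proof. by move=> H; right; exists x; split=> //; exact: connect0. Qed.

Lemma cyc_v w : connect e' v w -> e' w v -> good e' v.
Proof.
move=> H1 H2'; apply: cyc_good; exact: L_cyc H1 H2' (connect0 _ _).
Qed.

Lemma cyc_trans c : (exists y, e c y /\ connect e y c) -> good e' v -> good e' c.
Proof.
move=> [y [Hcy Hyc]] gv.
case: (Pclaim Hyc) => [Hyc'|Hvc]; last exact: good_trans gv Hvc.
case: (eqVneq c u) => [->|cu]; first exact: good_trans gv Hvu.
case: (eqVneq c v) => [->|cv]; first exact: gv.
by apply: cyc_good; exists y; split=> //; exact: H2.
Qed.

Lemma good_v w : e' w v -> good e w -> good e' v.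
Proof.
move=> Hwv [[b [Hb Hbw]]|[c [Hc Hcw]]].
  case: (Pclaim Hbw) => [Hbw'|Hvw]; last exact: cyc_v Hvw Hwv.
  by apply: good_trans (connect1 Hwv); left; exists b.
case: (Pclaim Hcw) => [Hcw'|Hvw]; last exact: cyc_v Hvw Hwv.
case: (Hc) => y [Hcy Hyc].
case: (Pclaim Hyc) => [Hyc'|Hvc].
  case: (eqVneq c u) => [ecu|cu].
    apply: (cyc_v (w:=w)) Hwv; apply: connect_trans Hvu _; by rewrite -ecu.
  case: (eqVneq c v) => [ecv|cv].
    by apply: (cyc_v (w:=w)) Hwv; rewrite -ecv.
  apply: good_trans (connect_trans Hcw' (connect1 Hwv)).
  by apply: cyc_good; exists y; split=> //; exact: H2.
exact: (cyc_v (w:=w)) (connect_trans Hvc Hcw') Hwv.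
Qed.

Lemma good_all : good e' v -> forall t, good e t -> good e' t.
Proof.
move=> gv t [[b [Hb Hbt]]|[c [Hc Hct]]].
  case: (Pclaim Hbt) => [H|H]; last exact: good_trans gv H.
  by left; exists b.
case: (Pclaim Hct) => [H|H]; last exact: good_trans gv H.
exact: good_trans (cyc_trans Hc gv) H.
Qed.

Lemma base_gen (w : T) (X : {set T}) (A : pred T) :
  e' w v -> (forall x, connect e x u -> connect e u x) ->
  (forall t, A t -> exists2 x, x \in X & connect e x t) ->
  forall t, A t -> exists2 x,
    x \in [set x | ((x \in X) && ~~ connect e x u) || (x == w)] & connect e' x t.
Proof.
move=> Hwv Hsrc HX t At; case: (HX t At) => x Hx Hxt.
have Hwt : connect e' v t -> exists2 x,
    x \in [set x | ((x \in X) && ~~ connect e x u) || (x == w)] & connect e' x t.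
  move=> Hvt; exists w; first by rewrite inE eqxx orbT.
  exact: connect_trans (connect1 Hwv) Hvt.
case Hxu: (connect e x u).
  have Hut := connect_trans (Hsrc x Hxu) Hxt.
  case: (Pclaim Hut) => [H|H]; last exact: Hwt.
  by apply: Hwt; apply: connect_trans Hvu H.
case: (Pclaim Hxt) => [H|H]; last exact: Hwt.
by exists x => //; rewrite inE Hx Hxu.
Qed.

End Graph.

Lemma bigmin_le (I : finType) (P : pred I) (F : I -> nat) x0 j :
  P j -> \big[minn/x0]_(i | P i) F i <= F j.
Proof.
move=> Pj; have : j \in index_enum I by rewrite mem_index_enum.
elim: (index_enum I) => [//|i r IH]; rewrite big_cons inE.
case/predU1P => [<-|Hj]; first by rewrite Pj geq_minl.
case: (P i); last exact: IH.
by rewrite geq_min IH ?orbT.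
Qed.

Lemma bigmin_gt (I : finType) (P : pred I) (F : I -> nat) x0 c :
  c < x0 -> (forall i, P i -> c < F i) -> c < \big[minn/x0]_(i | P i) F i.
Proof.
move=> H0 HF; apply: (big_ind (fun n => c < n)) => //.
by move=> a b Ha Hb; rewrite leq_min Ha Hb.
Qed.

Lemma sub_sum (T : finType) (P Q : pred T) (g : T -> nat) :
  (forall i, P i -> Q i) -> \sum_(i | P i) g i <= \sum_(i | Q i) g i.
Proof.
move=> H; rewrite [X in X <= _]big_mkcond [X in _ <= X]big_mkcond /=.
apply: leq_sum => i _; case Pi: (P i); last by [].
by rewrite H.
Qed.

Lemma cost (T : finType) (g : T -> nat) (X X' Bs : {set T}) x0 w :
  x0 \in X -> x0 \notin Bs -> x0 \notin X' ->
  (forall y, y \in X' -> (y \in X) || (y == w)) -> g w < g x0 ->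
  \sum_(i in X' :\: Bs) g i < \sum_(i in X :\: Bs) g i.
Proof.
move=> Hx0 HB HX' Hsub Hlt.
rewrite [X in _ < X](bigD1 x0) /=; last by rewrite inE HB Hx0.
have Hs : forall i, (i \in X' :\: Bs) && (i != w) ->
    (i \in X :\: Bs) && (i != x0).
  move=> i; rewrite !inE => /andP [/andP [iB iX'] iw].
  rewrite iB /=; case/orP: (Hsub i iX') => [->|/eqP iw']; last by rewrite iw' eqxx in iw.
  by apply/eqP => ex; rewrite -ex iX' in HX'.
case Hw: (w \in X' :\: Bs).
  rewrite (bigD1 w) //=; apply: leq_ltn_trans (_ : _ <= g w + _) _.
    by rewrite leq_add2l; exact: sub_sum Hs.
  by rewrite ltn_add2r.
apply: leq_ltn_trans (_ : _ <= \sum_(i | (i \in X :\: Bs) && (i != x0)) g i) _.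
  apply: sub_sum => i Hi; apply: Hs; rewrite Hi /=.
  by apply/eqP => ew; rewrite ew Hw in Hi.
by rewrite -[X in X < _]add0n ltn_add2r (leq_ltn_trans _ Hlt).
Qed.

Section S.
Variables (AC RN NOM : eqType) (T : finType).
Implicit Types (M : structure AC RN NOM T) (rho : reach AC RN).

Lemma Dedge_E M rho x y : Dedge M rho x y =
  [&& cI M (rA rho) x, cI M (rA rho) y & has (fun s => rI M s x y) (rS rho)].
Proof. by rewrite /Dedge /Dgraph inE. Qed.

Lemma inD1 M rho x : (x \in (Dgraph M rho).1) = cI M (rA rho) x.
Proof. by rewrite inE. Qed.

Lemma Dedge_eq M1 M2 rho : Dgraph M1 rho = Dgraph M2 rho -> Dedge M1 rho = Dedge M2 rho.
Proof. by rewrite /Dedge => ->. Qed.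

Lemma valD_eq M1 M2 rho g : Dgraph M1 rho = Dgraph M2 rho -> cI M1 = cI M2 ->
  valD M1 rho g = valD M2 rho g.
Proof.
move=> H H'; rewrite /valD /isBase /valX (Dedge_eq H) H H'; by [].
Qed.

Lemma connA M rho x t : connect (Dedge M rho) x t -> cI M (rA rho) t -> cI M (rA rho) x.
Proof.
move=> /connectP [[|y p] /= Hp ->] // _.
by case/andP: Hp; rewrite Dedge_E => /and3P [].
Qed.

Lemma rI_rhd M u v r s x y :
  rI (rhd M u v r) s x y = rI M s (if s == r then sw u v x else x) y.
Proof.
case: (eqVneq s r) => [->|ne]; first exact: rhd_rI.
by rewrite rhd_rI'.
Qed.

End S.

Lemma rI_rhdE (AC RN NOM : eqType) (T : finType) (M : structure AC RN NOM T) u v r s x y :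
  (if s == r then swap_rel (rI M r) u v else rI M s) x y =
  rI M s (if s == r then sw u v x else x) y.
Proof. exact: rI_rhd. Qed.
Unset Implicit Arguments. Set Strict Implicit.
Theorem lemma7 (AC RN NOM : eqType) (NF : pred RN) (T : finType)
  (phi : formula AC RN NOM) (RE : seq (reach AC RN)) (DI : seq (AC * AC))
  (M : structure AC RN NOM T) (f : 'I_(size RE) -> T -> nat)
  (h' : 'I_(size RE)) :
  wf_ALCQIObRe NF RE DI ->
  functional_ok NF M ->
  assoc_sat M phi RE DI ->
  semi_connected M phi RE DI ->
  (forall l : 'I_(size RE), useful M phi (tnth (in_tuple RE) l) (f l)) ->
  0 < valD M (tnth (in_tuple RE) h') (f h') ->
  exists (a0 a1 : T) (r : RN), NF r /\
    let M' := rhd M a0 a1 r in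
    (forall l : 'I_(size RE), l != h' ->
       Dgraph M (tnth (in_tuple RE) l) = Dgraph M' (tnth (in_tuple RE) l)) /\
    (forall u : T, tp M phi u = tp M' phi u) /\
    assoc_sat M' phi RE DI /\
    valD M (tnth (in_tuple RE) h') (f h') > valD M' (tnth (in_tuple RE) h') (f h') /\
    (forall l : 'I_(size RE), l != h' ->
       valD M (tnth (in_tuple RE) l) (f l) = valD M' (tnth (in_tuple RE) l) (f l)) /\
    semi_connected M' phi RE DI /\
    (forall l : 'I_(size RE), useful M' phi (tnth (in_tuple RE) l) (f l)).
Proof.
move=> [Huniq Hall Hcomp] _ Hassoc [_ Hsc] Huse Hval.
set rho := tnth (in_tuple RE) h'.
have Hrho : rho \in RE by exact: (mem_tnth h' (in_tuple RE)).
set e := Dedge M rho.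
set g := f h'.
have HBA : forall x, cI M (rB rho) x -> cI M (rA rho) x.
  case/and3P: Hassoc => _ /allP /(_ rho Hrho) /forallP HB _ x Hx.
  by move: (HB x); rewrite Hx.
pose Ub t := cI M (rA rho) t && [forall b, cI M (rB rho) b ==> ~~ connect e b t].
have [t0 Ht0] : exists t0, Ub t0.
  case: (boolP [exists t, Ub t]) => [/existsP //|Hn].
  suff : valD M rho g <= 0 by rewrite leqn0 => /eqP H; rewrite /g H in Hval.
  apply: leq_trans (bigmin_le _ _ (j := [set x | cI M (rB rho) x]) _) _.
    apply/andP; split.
      by apply/subsetP => x; rewrite !inE; exact: HBA.
    apply/forallP => t; apply/implyP => Ht; rewrite inD1 in Ht.
    move: Hn; rewrite negb_exists => /forallP /(_ t); rewrite /Ub Ht /=.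
    rewrite negb_forall => /existsP [b]; rewrite negb_imply negbK => /andP [Hb Hbt].
    by apply/existsP; exists b; rewrite inE Hb.
  by rewrite /valX setDv big_set0.
have UA : forall t, Ub t -> cI M (rA rho) t by move=> t /andP [].
have Unot : forall t, Ub t -> forall b, cI M (rB rho) b -> ~~ connect e b t.
  by move=> t /andP [_ /forallP H] b Hb; move: (H b); rewrite Hb.
have Udown : forall t x, Ub t -> connect e x t -> Ub x.
  move=> t x Ht Hxt; apply/andP; split; first exact: connA Hxt (UA _ Ht).
  apply/forallP => b; apply/implyP => Hb; apply: contra (Unot _ Ht _ Hb) => Hbx.
  exact: connect_trans Hbx Hxt.
pose Src t := Ub t && [forall x, connect e x t ==> connect e t x].
have SrcE : forall t x, Src t -> connect e x t -> connect e t x.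
  by move=> t x /andP [_ /forallP H] Hx; move: (H x); rewrite Hx.
have Sdown : forall t x, Src t -> connect e x t -> Src x.
  move=> t x Ht Hxt; apply/andP; split; first by apply: Udown Hxt; case/andP: Ht.
  apply/forallP => y; apply/implyP => Hy.
  exact: connect_trans (connect_trans Hxt (SrcE _ _ Ht (connect_trans Hy Hxt))) _.
have [t1 Ht1] : exists t1, Src t1.
  case: (arg_minnP (fun t => #|[set x | connect e x t]|) Ht0) => t1 Ht1 Hmin.
  exists t1; apply/andP; split=> //; apply/forallP => x; apply/implyP => Hx.
  apply/negPn/negP => Hn.
  have := Hmin x (Udown _ _ Ht1 Hx); apply/negP; rewrite -ltnNge.
  apply: proper_card; apply/properP; split.
    by apply/subsetP => y; rewrite !inE => Hy; exact: connect_trans Hy Hx.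
  by exists t1; rewrite !inE ?connect0.
case: (arg_minnP g Ht1) => u Hu Humin.
have UU : Ub u by case/andP: Hu.
have uA : cI M (rA rho) u := UA _ UU.
have uB : ~~ cI M (rB rho) u.
  by apply/negP => Hb; move: (Unot _ UU _ Hb); rewrite connect0.
have uD1 : u \in (Dgraph M rho).1 by rewrite inD1.
have [_ Htpu Hwit] := Huse h' u uD1.
case: Hwit => [Hb|[v [w [Hv Hw Hfuv Hfw Hwv]]]]; first by rewrite Hb in uB.
rewrite !inD1 in Hv Hw.
have nwu : ~~ connect e w u.
  apply/negP => Hwu; have := Humin w (Sdown _ _ Hu Hwu).
  by rewrite /g Hfuv leqNgt Hfw.
have nvu : ~~ connect e v u.
  apply: contra nwu => Hvu; exact: connect_trans (connect1 Hwv) Hvu.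
have vu : v != u by apply: contraNneq nvu => ->; exact: connect0.
have wu : w != u by apply: contraNneq nwu => ->; exact: connect0.
have wv : w != v by apply: contraTneq Hfw => ->; rewrite ltnn.
have [z [Huz Hzu]] : exists z, e u z /\ connect e z u.
  case: (Hsc rho Hrho u uD1) => [[b [Hb Hbu]]|[c [Hc Hcu]]].
    by move: (Unot _ UU _ Hb); rewrite Hbu.
  case/existsP: Hc => y /andP [Hcy Hyc].
  exact: L_cyc (SrcE _ _ Hu Hcu) Hcy (connect_trans Hyc Hcu).
have := Huz; rewrite /e Dedge_E => /and3P [_ zA /hasP [r Hr Hruz]].
have NFr : NF r by move/allP: Hall => /(_ rho Hrho) /allP; apply.
exists u, v, r; split=> //.
set M' := rhd M u v r.
have swo : forall x, x != u -> x != v -> sw u v x = x.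
  by move=> x xu xv; rewrite /sw (negbTE xu) (negbTE xv).
have swv : sw u v v = u by rewrite /sw (negbTE vu) eqxx.
have swu : sw u v u = v by rewrite /sw eqxx.
set e' := Dedge M' rho.
have H2' : forall x y, x != u -> x != v -> e x y -> e' x y.
  move=> x y xu xv; rewrite /e /e' !Dedge_E => /and3P [-> -> /hasP [s Hs Hsx]] /=.
  by apply/hasP; exists s => //; rewrite /M' ?rI_rhd ?rI_rhdE swo // if_same.
have H3' : forall x y, (x == u) || (x == v) -> e x y -> e' u y || e' v y.
  move=> x y Hx; rewrite /e Dedge_E => /and3P [_ yA /hasP [s Hs Hsx]] /=.
  have Hc : forall a, (a == u) || (a == v) -> rI M s x y -> rI M' s a y ->
      e' u y || e' v y.
    move=> a /orP [] /eqP -> _ H; rewrite /e' !Dedge_E /= ?uA ?Hv yA /=.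
      by apply/orP; left; apply/hasP; exists s.
    by apply/orP; right; apply/hasP; exists s.
  case: (eqVneq s r) => [esr|ne].
    apply: (Hc (sw u v x) _ Hsx).
      by case/orP: Hx => /eqP ->; rewrite ?swu ?swv eqxx ?orbT.
    by rewrite /M' ?rI_rhd ?rI_rhdE esr eqxx swK -esr.
  by apply: (Hc x Hx Hsx); rewrite /M' ?rI_rhd ?rI_rhdE (negbTE ne).
have Hvz : e' v z.
  by rewrite /e' Dedge_E /= Hv zA; apply/hasP; exists r => //; rewrite /M' ?rI_rhd ?rI_rhdE eqxx swv.
have Hwv' : e' w v by apply: H2' => //.
have Hvu' : connect e' v u.
  exact: connect_trans (connect1 Hvz) (RU H2' nvu Hzu).
have Htpuv : tp M phi u = tp M phi v by apply: Htpu; rewrite ?inD1.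
have [Htp' Hfs] := tp_rhd r Htpuv.
have HD : forall l : 'I_(size RE), l != h' ->
    Dgraph M (tnth (in_tuple RE) l) = Dgraph M' (tnth (in_tuple RE) l).
  move=> l lh; set rl := tnth (in_tuple RE) l.
  have Hdisj : r \in rS rl -> forall x, cI M (rA rl) x -> (x != u) && (x != v).
    move=> Hrl x Hx.
    have := Hcomp h' l; rewrite eq_sym lh => /(_ isT); rewrite -/rho -/rl.
    move=> /(_ (introT hasP (ex_intro2 _ _ r Hr Hrl))) Hdi.
    case/and3P: Hassoc => _ _ /allP HDI.
    have Hd : forall y, cI M (rA rho) y -> cI M (rA rl) y -> False.
      move=> y H1 H2; case/orP: Hdi => /HDI /forallP /(_ y) /=; by rewrite H1 H2.
    apply/andP; split; apply/negP => /eqP E; subst x; exact: Hd Hx.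
  rewrite /Dgraph; congr pair; apply/setP => -[x y]; rewrite !inE /=.
  case Hx: (cI M (rA rl) x) => //=; case: (cI M (rA rl) y) => //=.
  apply: eq_in_has => s Hs; rewrite /M' ?rI_rhd ?rI_rhdE.
  case: (eqVneq s r) => [esr|] //=; subst s.
  by case/andP: (Hdisj Hs x Hx) => xu xv; rewrite swo.
split; first exact: HD.
split; first by move=> x; rewrite Htp'.
have Hassoc' : assoc_sat M' phi RE DI by rewrite /assoc_sat Hfs.
split; first exact: Hassoc'.
have Hb : forall X, isBase M rho X -> valD M' rho g < valX M rho g X.
  move=> X /andP [/subsetP XA /forallP HX].
  have HX2 : forall t, cI M (rA rho) t -> exists2 x, x \in X & connect e x t.
    move=> t Ht; move: (HX t); rewrite inD1 Ht /= => /existsP [x /andP [Hx Hxt]].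
    by exists x.
  case: (HX2 u uA) => x0 Hx0 Hx0u.
  set X' := [set x | ((x \in X) && ~~ connect e x u) || (x == w)].
  have HB' : isBase M' rho X'.
    apply/andP; split.
      apply/subsetP => x; rewrite inE => /orP [/andP [Hx _]|/eqP ->].
        exact: XA.
      by rewrite inD1.
    apply/forallP => t; apply/implyP => Ht; rewrite inD1 in Ht.
    have [x Hx Hxt] := base_gen H2' H3' Hvu' Hwv' (fun x => SrcE u x Hu) HX2 Ht.
    by apply/existsP; exists x; rewrite Hx.
  apply: (@leq_ltn_trans (valX M' rho g X')); first by rewrite /valD; exact: bigmin_le.
  have Sx0 := Sdown _ _ Hu Hx0u.
  apply: (cost (x0 := x0) (w := w)) => //.
  - rewrite inE; apply/negP => Hb0.
    by move: (Unot _ (Udown _ _ UU Hx0u) _ Hb0); rewrite connect0.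
  - rewrite inE Hx0u andbF /=; apply/negP => /eqP E; subst x0.
    by rewrite Hx0u in nwu.
  - by move=> y; rewrite inE => /orP [/andP [-> _]|->]; rewrite ?orbT.
  - by apply: leq_trans (Humin _ Sx0); rewrite /g Hfuv.
split.
  rewrite {2}/valD; apply: bigmin_gt; last exact: Hb.
  apply: Hb; apply/andP; split; first exact: subxx.
  apply/forallP => t; apply/implyP => Ht; apply/existsP; exists t.
  by rewrite Ht connect0.
split.
  by move=> l lh; apply: valD_eq (HD l lh) _.
have Hgv : good (cI M (rB rho)) e' v.
  apply: (good_v H2' H3' Hvu' Hwv').
  case: (Hsc rho Hrho w); first by rewrite inD1.
    by move=> [b [Hb0 Hbw]]; left; exists b; split.
  move=> [c [/existsP [y /andP [Hcy Hyc]] Hcw]]; right; exists c; split=> //.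
  by exists y.
split.
  split; first exact: Hassoc'.
  move=> rl Hrl; have /tnthP [l El] : rl \in in_tuple RE by []; subst rl; move=> t Ht.
  case: (eqVneq l h') Ht => [->|lh] Ht.
    rewrite -/rho; have := Hsc rho Hrho t (Ht : t \in (Dgraph M rho).1) => Hg.
    have : good (cI M (rB rho)) e t.
      case: Hg => [[b [Hb0 Hbt]]|[c [/existsP [y /andP [Hcy Hyc]] Hct]]].
        by left; exists b; split.
      by right; exists c; split=> //; exists y.
    move/(good_all H2' H3' Hvu' Hgv) => [[b [Hb0 Hbt]]|[c [[y [Hcy Hyc]] Hct]]].
      by left; exists b; split.
    by right; exists c; split=> //; apply/existsP; exists y; apply/andP.
  have E := HD l lh; have EE := Dedge_eq E.
  rewrite -E in Ht; rewrite /on_cycle -EE.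
  exact: Hsc (mem_tnth l (in_tuple RE)) t Ht.
move=> l; case: (eqVneq l h') => [->|lh].
  move=> t Ht; have [H1 H2 H3] := Huse h' t Ht.
  split=> //.
    by move=> x Hx Hf; rewrite !Htp'; exact: H2.
  case: H3 => [Hb1|[v1 [w1 [Hv1 Hw1 Hf1 Hf2 Hwv1]]]]; first by left.
  right; rewrite -/rho in Hwv1 Hv1 Hw1 *.
  case: (eqVneq w1 u) => [ew|w1u].
    have Hm : (w1 == u) || (w1 == v) by rewrite ew eqxx.
    case/orP: (H3' _ _ Hm Hwv1) => Hx.
      by exists v1, u; split=> //; rewrite -ew.
    by exists v1, v; split=> //; rewrite ?inD1 // -Hfuv -ew.
  case: (eqVneq w1 v) => [ew|w1v].
    have Hm : (w1 == u) || (w1 == v) by rewrite ew eqxx orbT.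
    case/orP: (H3' _ _ Hm Hwv1) => Hx.
      by exists v1, u; split=> //; rewrite ?inD1 // Hfuv -ew.
    by exists v1, v; split=> //; rewrite -ew.
  by exists v1, w1; split=> //; exact: H2'.
have E := HD l lh; have EE := Dedge_eq E.
rewrite /useful -E -EE; move=> t Ht; rewrite !Htp'.
case: (Huse l t Ht) => H1 H2 H3; split=> // x Hx Hf; rewrite Htp'; exact: H2.
Qed.
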